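(* Let $\mathcal{A}$ be a finite list of elements of a finitely generated abelian group $\Gamma$, let $G$ be a torsion-wise finite abelian group, and suppose $\mathcal{A}\subset\Gamma_{\mathrm{tor}}$. Then $$T^G_{\mathcal{A}}(x,y)=\sum_{k=0}^{\#\mathcal{A}}\Bigg(\sum_{\substack{\mathcal{S}\subset\mathcal{A}\\ \#\mathcal{S}=k}}\#\mathcal{M}(\mathcal{A}/\mathcal{S};\Gamma_{\mathrm{tor}}/\langle\mathcal{S}\rangle,G)\Bigg)y^k.$$ In particular $T^G_{\mathcal{A}}(x,y)$ is a polynomial in $y$ alone whose coefficients are non-negative integers.
   Context: $G$ is torsion-wise finite if $G[d]=\{x\in G\mid dx=0\}$ is finite for all $d>0$. Sublists are distinguished by index. $r_{\mathcal{S}}$ is the rank of $\langle\mathcal{S}\rangle$, $m(\mathcal{S};G)=\#\mathrm{Hom}((\Gamma/\langle\mathcal{S}\rangle)_{\mathrm{tor}},G)$, $T^G_{\mathcal{A}}(x,y)=\sum_{\mathcal{S}\subset\mathcal{A}}m(\mathcal{S};G)(x-1)^{r_{\mathcal{A}}-r_{\mathcal{S}}}(y-1)^{\#\mathcal{S}-r_{\mathcal{S}}}$. For a list $\mathcal{B}$ in an abelian group $\Lambda$, $\mathcal{M}(\mathcal{B};\Lambda,G)=\mathrm{Hom}(\Lambda,G)\smallsetminus\bigcup_{\beta\in\mathcal{B}}\{\varphi\mid\varphi(\beta)=0\}$; the contraction $\mathcal{A}/\mathcal{S}$ is the list of cosets $\{\overline\alpha\mid\alpha\in\mathcal{A}\smallsetminus\mathcal{S}\}$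 in $\Gamma_{\mathrm{tor}}/\langle\mathcal{S}\rangle$. *)

(* Defs.v *)
From HB Require Import structures.
From mathcomp Require Import all_boot all_order all_algebra.
From Stdlib Require Import ClassicalEpsilon.
Set Implicit Arguments. Unset Strict Implicit. Unset Printing Implicit Defensive.
Import Order.TTheory GRing.Theory Num.Theory.
Local Open Scope ring_scope.

Section Defs.
Variables (Gam G : zmodType).

Definition fin_gen : Prop :=
  exists gens : seq Gam, forall x, exists c : 'I_(size gens) -> int,
    x = \sum_(i < size gens) gens`_i *~ c i.

Definition torsionwise_finite : Prop :=
  forall d : nat, (0 < d)%N -> exists s : seq G, forall x : G, x *+ d = 0 -> x \in s.

Definition torsion (x : Gam) : Prop := exists n : nat, (0 < n)%N /\ x *+ n = 0.

Variable A : seq Gam.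

Definition in_span (S : {set 'I_(size A)}) (x : Gam) : Prop :=
  exists c : 'I_(size A) -> int, x = \sum_(i in S) A`_i *~ c i.

Definition Zindep (l : seq Gam) : Prop :=
  forall c : 'I_(size l) -> int, \sum_(i < size l) l`_i *~ c i = 0 -> forall i, c i = 0.

Definition rank_is (S : {set 'I_(size A)}) (r : nat) : Prop :=
  (exists l : seq Gam, size l = r /\ (forall x, x \in l -> in_span S x) /\ Zindep l) /\
  (forall l : seq Gam, (forall x, x \in l -> in_span S x) -> Zindep l -> (size l <= r)%N).

Definition rk (S : {set 'I_(size A)}) : nat := epsilon (inhabits 0%N) (rank_is S).

Definition hom_on (P : Gam -> Prop) (f : Gam -> G) : Prop :=
  forall a b, P a -> P b -> f (a - b) = f a - f b.

(* number of maps satisfying Q, counted up to agreement on P, is n *)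
Definition card_mod (P : Gam -> Prop) (Q : (Gam -> G) -> Prop) (n : nat) : Prop :=
  exists fs : seq (Gam -> G), size fs = n /\
    (forall i, (i < n)%N -> Q (nth (fun _ => 0) fs i)) /\
    (forall i j, (i < n)%N -> (j < n)%N -> i <> j ->
       exists a, P a /\ nth (fun _ => 0) fs i a <> nth (fun _ => 0) fs j a) /\
    (forall f, Q f -> exists2 i, (i < n)%N & forall a, P a -> f a = nth (fun _ => 0) fs i a).

Definition count_mod (P : Gam -> Prop) (Q : (Gam -> G) -> Prop) : nat :=
  epsilon (inhabits 0%N) (card_mod P Q).

(* the subgroup of Gamma that is the preimage of (Gamma/<S>)_tor *)
Definition tor_mod (S : {set 'I_(size A)}) (x : Gam) : Prop :=
  exists n : nat, (0 < n)%N /\ in_span S (x *+ n).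

(* m(S;G) = #Hom((Gamma/<S>)_tor, G): homs on tor_mod S vanishing on <S> *)
Definition mSG (S : {set 'I_(size A)}) : nat :=
  count_mod (tor_mod S) (fun f => hom_on (tor_mod S) f /\ forall a, in_span S a -> f a = 0).

(* #M(A/S; Gamma_tor/<S>, G): homs Gamma_tor/<S> -> G nonzero on all cosets of alpha in A \ S *)
Definition McountS (S : {set 'I_(size A)}) : nat :=
  count_mod torsion (fun f => hom_on torsion f /\ (forall a, in_span S a -> f a = 0) /\
     forall i : 'I_(size A), i \notin S -> f A`_i <> 0).

Definition TutteG (R : comNzRingType) (x y : R) : R :=
  \sum_(S : {set 'I_(size A)})
    (mSG S)%:R * (x - 1) ^+ (rk setT - rk S) * (y - 1) ^+ (#|S| - rk S).

End Defs.

(* Main.v *)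
Require Import Defs.
From HB Require Import structures.
From mathcomp Require Import all_boot all_order all_algebra.
From Stdlib Require Import ClassicalEpsilon Classical.
From mathcomp Require Import ring.
Import Order.TTheory GRing.Theory Num.Theory.
Set Implicit Arguments. Unset Strict Implicit. Unset Printing Implicit Defensive.
Local Open Scope ring_scope.

Definition pb (P : Prop) : bool := if excluded_middle_informative P then true else false.
Lemma pbP P : reflect P (pb P).
Proof. by rewrite /pb; case: excluded_middle_informative => h; constructor. Qed.

Section Span.
Variable Gam : zmodType.

Fixpoint spanL (l : seq Gam) (x : Gam) : Prop :=
  match l with [::] => x = 0 | g :: l' => exists k : int, spanL l' (x - g *~ k) end.

Lemma spanL0 l : spanL l 0.
Proof. elim: l => [|g l IH] //=; exists 0; by rewrite mulr0z subr0. Qed.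

Lemma spanLB l x y : spanL l x -> spanL l y -> spanL l (x - y).
Proof.
elim: l x y => [|g l IH] x y /=; first by move=> -> ->; rewrite subr0.
move=> [k hk] [m hm]; exists (k - m).
have := IH _ _ hk hm; congr spanL; rewrite mulrzBr.
by rewrite !opprB !addrA [LHS]addrAC (addrAC x) [RHS]addrAC.
Qed.

Lemma spanLN l x : spanL l x -> spanL l (- x).
Proof. by move=> h; rewrite -sub0r; apply: spanLB => //; apply: spanL0. Qed.

Lemma spanLD l x y : spanL l x -> spanL l y -> spanL l (x + y).
Proof. by move=> hx hy; rewrite -[y]opprK; apply: spanLB => //; apply: spanLN. Qed.

Lemma spanLz l x k : spanL l x -> spanL l (x *~ k).
Proof.
elim: l x => [|g l IH] x /=; first by move=> ->; rewrite mul0rz.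
move=> [k' hk]; exists (k' * k); have := IH _ hk; congr spanL.
by rewrite mulrzBl mulrzA.
Qed.

Lemma spanLn l x n : spanL l x -> spanL l (x *+ n).
Proof. by move=> h; rewrite -mulrz_nat; apply: spanLz. Qed.

Lemma spanL_cons l g x : spanL l x -> spanL (g :: l) x.
Proof. by move=> h; exists 0; rewrite mulr0z subr0. Qed.

Lemma spanL_g l g : spanL (g :: l) g.
Proof. by exists 1; rewrite mulr1z subrr; apply: spanL0. Qed.

Lemma spanL_sum (gens : seq Gam) (c : 'I_(size gens) -> int) :
  spanL gens (\sum_(i < size gens) gens`_i *~ c i).
Proof.
elim: gens c => [|g l IH] c /=; first by rewrite big_ord0.
exists (c ord0); rewrite big_ord_recl /= addrAC subrr add0r.
exact: (IH (fun i => c (lift ord0 i))).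
Qed.

Definition tmod (h : seq Gam) (x : Gam) := exists N, (0 < N)%N /\ spanL h (x *+ N).

Lemma tmodB h a b : tmod h a -> tmod h b -> tmod h (a - b).
Proof.
move=> [N1 [N10 h1]] [N2 [N20 h2]]; exists (N1 * N2)%N; split; first by rewrite muln_gt0 N10.
rewrite mulrnBl; apply: spanLB; first by rewrite mulrnA; apply: spanLn.
by rewrite mulnC mulrnA; apply: spanLn.
Qed.

Lemma tmod_span h x : spanL h x -> tmod h x.
Proof. by move=> hx; exists 1%N; rewrite mulr1n. Qed.

Lemma tmod_g0 h g m : ~ (exists d, (0 < d)%N /\ spanL h (g *+ d)) ->
  tmod h (g *~ m) -> m = 0.
Proof.
move=> nd [N [N0 hN]]; apply/eqP; apply/negPn/negP => /negP mn0; apply: nd.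
have mN0 : m * N%:Z != 0.
 by rewrite mulf_neq0 //; [apply/negP | case: (N) N0].
exists (absz (m * N%:Z)); split; first by rewrite absz_gt0.
rewrite -mulrz_nat [X in spanL _ X](_ : _ = g *~ m *+ N *~ sgz (m * N%:Z)).
  exact: spanLz.
rewrite -mulrz_nat -!mulrzA; congr (_ *~ _).
rewrite [X in X = _]natz abszEsg [LHS]mulrC -mulrA; congr (_ * (_ * _)); exact/esym/natz.
Qed.

Lemma fin_choose h g (nd : ~ (exists d, (0 < d)%N /\ spanL h (g *+ d))) (s' : seq Gam) :
  exists s : seq Gam, forall t, t \in s' -> forall j, tmod h (g *~ j + t) ->
    exists2 w, w \in s & spanL h (g *~ j + t - w).
Proof.
  elim: s' => [|t0 s'' [sr hsr]]; first by exists [::].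
  case: (classic (exists j0, tmod h (g *~ j0 + t0))) => [[j0 hj0]|nj].
    exists (g *~ j0 + t0 :: sr) => t; rewrite inE => /orP[/eqP ->|ht] j hj.
      exists (g *~ j0 + t0); first by rewrite inE eqxx.
      have e0 : j - j0 = 0.
        apply: (tmod_g0 nd).
        have -> : g *~ (j - j0) = (g *~ j + t0) - (g *~ j0 + t0).
          by rewrite opprD addrACA subrr addr0 mulrzBr.
        exact: tmodB.
      have -> : j = j0 by apply/eqP; rewrite -subr_eq0 e0.
      rewrite subrr; exact: spanL0.
    have [w hw hw'] := hsr _ ht _ hj; exists w => //; by rewrite inE hw orbT.
  exists sr => t; rewrite inE => /orP[/eqP ->|ht] j hj; last exact: hsr.
  by case: nj; exists j.
Qed.

Lemma fin_tor l h : exists s : seq Gam, forall x, spanL l x -> tmod h x ->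
  exists2 t, t \in s & spanL h (x - t).
Proof.
elim: l h => [|g l IH] h.
  exists [:: 0] => x /= -> _; exists 0; rewrite ?inE // subr0; exact: spanL0.
case: (classic (exists d, (0 < d)%N /\ spanL h (g *+ d))) => [[d [d0 hd]]|nd].
  have [s' hs'] := IH h.
  exists [seq g *+ r + t | r <- iota 0 d, t <- s'] => x [k hk] [N [N0 hN]].
  have tmy : tmod h (x - g *~ k).
    exists (N * d)%N; split; first by rewrite muln_gt0 N0.
    have -> : (x - g *~ k) *+ (N * d) = x *+ N *+ d - (g *+ d) *~ (k * N%:Z).
      rewrite mulrnBl mulrnA; congr (_ - _).
      change (g *~ k *~ (N * d)%N%:Z = g *~ d%:Z *~ (k * N%:Z)).
      by rewrite -!mulrzA PoszM; congr (_ *~ _); ring.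
    by apply: spanLB; [apply: spanLn | apply: spanLz].
  have [t ht hyt] := hs' _ hk tmy.
  have d0' : (d%:Z != 0) by case: (d) d0.
  pose r := absz (k %% d%:Z)%Z.
  have hr : r%:Z = (k %% d%:Z)%Z by rewrite /r gez0_abs // modz_ge0.
  have ek : g *~ k = g *+ r + (g *+ d) *~ (k %/ d%:Z)%Z.
    rewrite {1}(divz_eq k d%:Z) mulrzDr addrC -hr; congr (_ + _).
    by rewrite mulrzA mulrzAC.
  exists (g *+ r + t).
    apply/allpairsP; exists (r, t); split => //=; rewrite mem_iota /= add0n.
    by rewrite -ltz_nat hr ltz_pmod.
  have -> : x - (g *+ r + t) = (x - g *~ k - t) + (g *+ d) *~ (k %/ d%:Z)%Z.
    by rewrite ek opprD opprD !addrA [RHS]addrAC subrK.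
  by apply: spanLD => //; apply: spanLz.
have [s' hs'] := IH (g :: h).
have [s hs] := fin_choose nd s'.
exists s => x [k hk] [N [N0 hN]].
have tmy : tmod (g :: h) (x - g *~ k).
  exists N; split => //; rewrite mulrnBl; apply: spanLB; first exact: spanL_cons.
  by apply: spanLn; apply: spanLz; apply: spanL_g.
have [t ht [m hm]] := hs' _ hk tmy.
set w0 := g *~ (k + m) + t.
have ew : x - w0 = x - g *~ k - t - g *~ m.
  by rewrite /w0 mulrzDr opprD opprD !addrA addrAC.
have tw : tmod h w0.
  have -> : w0 = x - (x - w0) by rewrite opprB addrCA subrr addr0.
  by apply: tmodB; [exists N | apply: tmod_span; rewrite ew].
have [w hw hw'] := hs t ht (k + m) tw.
exists w => //; have -> : x - w = (x - w0) + (w0 - w) by rewrite addrA subrK.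
by apply: spanLD => //; rewrite ew.
Qed.
End Span.
Section Count.
Variables (Gam G : zmodType) (P : Gam -> Prop) (ts : seq Gam) (gs : seq G).
Hypotheses (uts : uniq ts) (Pts : forall a, P a <-> a \in ts).

Fixpoint allL n : seq (seq G) :=
  if n is n'.+1 then [seq a :: v | a <- gs, v <- allL n'] else [:: [::]].

Lemma allLP n v : size v = n -> all (mem gs) v -> v \in allL n.
Proof.
elim: n v => [|n IH] [|a v] //= [sv] /andP[ha hv].
by apply/allpairsP; exists (a, v); split => //=; apply: IH.
Qed.

Lemma allL_size n v : v \in allL n -> size v = n.
Proof.
elim: n v => [|n IH] v /=; first by rewrite inE => /eqP ->.
by move=> /allpairsP[[a w] [_ /= hw ->]] /=; rewrite (IH _ hw).
Qed.

Definition ext (v : seq G) (x : Gam) := nth 0 v (index x ts).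

Lemma extK f x : x \in ts -> ext (map f ts) x = f x.
Proof. by move=> hx; rewrite /ext (nth_map 0) ?index_mem // nth_index. Qed.

Definition VV := undup (allL (size ts)).

Lemma card_mod_le (Q : (Gam -> G) -> Prop) n m : card_mod P Q n -> card_mod P Q m -> (n <= m)%N.
Proof.
move=> [fs [sz [hq [hd hc]]]] [fs' [sz' [hq' [hd' hc']]]].
have : forall i : 'I_n, exists j : 'I_m, forall a, P a ->
    nth (fun _ => 0) fs i a = nth (fun _ => 0) fs' j a.
  move=> i; have [j jm hj] := hc' _ (hq _ (ltn_ord i)).
  by exists (Ordinal jm) => a Pa; rewrite hj.
move=> /fin_all_exists[phi hphi].
have injphi : injective phi.
  move=> i i' e; apply/eqP; apply/negPn/negP => /eqP ne.
  have ne' : (i : nat) <> i' by move=> e'; apply: ne; apply: val_inj.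
  have [a [Pa ha]] := hd _ _ (ltn_ord i) (ltn_ord i') ne'.
  by apply: ha; rewrite (hphi i a Pa) (hphi i' a Pa) e.
by have := leq_card phi injphi; rewrite !card_ord.
Qed.

Lemma card_mod_uniq (Q : (Gam -> G) -> Prop) n m : card_mod P Q n -> card_mod P Q m -> n = m.
Proof. by move=> h1 h2; apply/anti_leq; rewrite !(card_mod_le h1 h2, card_mod_le h2 h1). Qed.

Lemma nth_diff (u w : seq G) : size u = size w -> u != w ->
  exists k, (k < size u)%N /\ nth 0 u k != nth 0 w k.
Proof.
move=> sz ne; apply: NNPP => hn; move/negP: ne; apply; apply/eqP.
apply: (eq_from_nth (x0 := 0)) => // k hk; apply/eqP; apply/negPn/negP => h.
by apply: hn; exists k.
Qed.

Lemma count_modE (Q : (Gam -> G) -> Prop)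
  (hinv : forall f g, (forall a, P a -> f a = g a) -> Q f -> Q g)
  (hval : forall f, Q f -> forall a, P a -> f a \in gs) :
  count_mod P Q = count (fun v => pb (Q (ext v))) VV.
Proof.
set W := [seq v <- VV | pb (Q (ext v))].
have uW : uniq W by rewrite filter_uniq // undup_uniq.
have WP v : v \in W -> Q (ext v) /\ size v = size ts.
  rewrite mem_filter mem_undup => /andP[/pbP hq hv]; split => //.
  exact: allL_size hv.
have cm : card_mod P Q (size W).
  exists (map ext W); split; first by rewrite size_map.
  split.
    move=> i hi; rewrite (nth_map [::]) //; exact: (proj1 (WP _ (mem_nth [::] hi))).
  split.
    move=> i j hi hj ne; rewrite !(nth_map [::]) //.
    have ne' : nth [::] W i != nth [::] W j by rewrite nth_uniq //; apply/eqP.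
    have [k [hk hk']] := nth_diff (etrans (proj2 (WP _ (mem_nth [::] hi))) (esym (proj2 (WP _ (mem_nth [::] hj))))) ne'.
    have hkt : (k < size ts)%N by rewrite -(proj2 (WP _ (mem_nth [::] hi))).
    exists (nth 0 ts k); split; first by apply/Pts; apply: mem_nth.
    by rewrite /ext index_uniq //; apply/eqP.
  move=> f hf; set v := map f ts.
  have vW : v \in W.
    rewrite mem_filter mem_undup; apply/andP; split.
      apply/pbP; apply: (hinv f) hf => a /Pts ha; by rewrite extK.
    apply: allLP; first by rewrite size_map.
    by apply/allP => y /mapP[a ha ->]; apply: (hval _ hf); apply/Pts.
  exists (index v W); first by rewrite index_mem.
  move=> a /Pts ha; rewrite (nth_map [::]) ?index_mem // nth_index //.
  by rewrite extK.
rewrite -size_filter -/W; apply: (card_mod_uniq _ cm).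
by apply: epsilon_spec; exists (size W).
Qed.
End Count.
Section Tor.
Variable Gam : zmodType.
Implicit Types a b x : Gam.

Lemma torsion0 : torsion (0 : Gam).
Proof. by exists 1%N; rewrite mulr1n. Qed.

Lemma torsionB a b : torsion a -> torsion b -> torsion (a - b).
Proof.
move=> [n [n0 hn]] [m [m0 hm]]; exists (n * m)%N; split; first by rewrite muln_gt0 n0.
by rewrite mulrnBl mulrnA hn mul0rn mulnC mulrnA hm mul0rn subr0.
Qed.

Lemma torsionN a : torsion a -> torsion (- a).
Proof. by move=> h; rewrite -sub0r; apply: torsionB => //; apply: torsion0. Qed.

Lemma torsionD a b : torsion a -> torsion b -> torsion (a + b).
Proof. by move=> ha hb; rewrite -[b]opprK; apply: torsionB => //; apply: torsionN. Qed.

Lemma torsionn a n : torsion a -> torsion (a *+ n).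
Proof.
move=> [m [m0 hm]]; exists m; split => //; by rewrite -mulrnA mulnC mulrnA hm mul0rn.
Qed.

Lemma torsionz a c : torsion a -> torsion (a *~ c).
Proof. by move=> h; case: c => n /=; [apply: torsionn | apply: torsionN; apply: torsionn]. Qed.

Lemma tor_fin : fin_gen Gam -> exists s : seq Gam, forall x, torsion x -> x \in s.
Proof.
move=> [gens hg]; have [s hs] := fin_tor gens [::].
exists s => x [n [n0 hn]].
have sx : spanL gens x by have [c ->] := hg x; apply: spanL_sum.
have [t ht /= ht'] := hs x sx (ex_intro _ n (conj n0 hn)).
by move/eqP: ht'; rewrite subr_eq0 => /eqP ->.
Qed.

Lemma common_exp (ts : seq Gam) : (forall x, x \in ts -> torsion x) ->
  exists E, (0 < E)%N /\ forall x, x \in ts -> x *+ E = 0.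
Proof.
elim: ts => [|t ts IH] h; first by exists 1%N.
have [E [E0 hE]] := IH (fun x hx => h x (@mem_behead _ (t :: ts) x hx)).
have [n [n0 hn]] := h t (mem_head _ _).
exists (n * E)%N; split; first by rewrite muln_gt0 n0.
move=> x; rewrite inE => /orP[/eqP ->|hx]; first by rewrite mulrnA hn mul0rn.
by rewrite mulnC mulrnA hE ?mul0rn.
Qed.

Lemma hom_eq (G : zmodType) (P P' : Gam -> Prop) (f : Gam -> G) :
  (forall a, P a <-> P' a) -> hom_on P f -> hom_on P' f.
Proof. by move=> e h a b /e ha /e hb; apply: h. Qed.

End Tor.

Section Hom.
Variables (Gam G : zmodType) (f : Gam -> G).
Hypothesis hf : hom_on (@torsion Gam) f.

Lemma f0 : f 0 = 0.
Proof. by have := hf (@torsion0 Gam) (@torsion0 Gam); rewrite !subrr. Qed.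

Lemma fN b : torsion b -> f (- b) = - f b.
Proof. by move=> hb; have := hf (@torsion0 Gam) hb; rewrite !sub0r f0 sub0r. Qed.

Lemma fD a b : torsion a -> torsion b -> f (a + b) = f a + f b.
Proof.
move=> ha hb; have := hf ha (torsionN hb); rewrite opprK => ->.
by rewrite fN // opprK.
Qed.

Lemma fn a n : torsion a -> f (a *+ n) = f a *+ n.
Proof.
move=> ha; elim: n => [|n IH]; first by rewrite !mulr0n f0.
by rewrite !mulrS fD ?IH //; apply: torsionn.
Qed.

Lemma fz a c : torsion a -> f (a *~ c) = f a *~ c.
Proof.
by move=> ha; case: c => n /=; [apply: fn | rewrite fN ?fn //; apply: torsionn].
Qed.

Lemma f_sum (I : finType) (S : pred I) (g : I -> Gam) (c : I -> int) :
  (forall i, torsion (g i)) ->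
  f (\sum_(i | S i) g i *~ c i) = \sum_(i | S i) f (g i) *~ c i.
Proof.
move=> hg.
pose K u v := torsion u /\ f u = v.
suff [] : K (\sum_(i | S i) g i *~ c i) (\sum_(i | S i) f (g i) *~ c i) by [].
apply: (big_ind2 K).
- by split; [apply: torsion0 | apply: f0].
- by move=> x1 x2 y1 y2 [t1 e1] [t2 e2]; split; [apply: torsionD | rewrite fD // e1 e2].
- by move=> i _; split; [apply: torsionz | apply: fz].
Qed.
End Hom.
Section Main.
Variables (Gam G : zmodType) (A : seq Gam).
Hypothesis hA : forall i : 'I_(size A), torsion A`_i.

Lemma span_tor (S : {set 'I_(size A)}) a : in_span S a -> torsion a.
Proof.
move=> [c ->]; apply: (big_ind (@torsion Gam)).
- exact: torsion0.
- exact: torsionD.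
- by move=> i _; apply: torsionz.
Qed.

Lemma in_span0 (S : {set 'I_(size A)}) : in_span S 0.
Proof. by exists (fun _ => 0); rewrite big1 // => i _; apply: mulr0z. Qed.

Lemma in_spanA (S : {set 'I_(size A)}) i : i \in S -> in_span S A`_i.
Proof.
move=> iS; exists (fun j => if j == i then 1 else 0).
rewrite (bigD1 i) //= eqxx mulr1z big1 ?addr0 // => j /andP[_ /negbTE ->].
exact: mulr0z.
Qed.

Lemma tor_modE (S : {set 'I_(size A)}) x : tor_mod S x <-> torsion x.
Proof.
split.
  move=> [n [n0 hn]]; have [m [m0 hm]] := span_tor hn.
  by exists (n * m)%N; rewrite muln_gt0 n0 mulrnA.
move=> [n [n0 hn]]; exists n; split => //; rewrite hn; exact: in_span0.
Qed.

Lemma rank0 (S : {set 'I_(size A)}) : rank_is S 0.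
Proof.
split.
  exists [::]; split => //; split => // c _ [] //.
move=> [|a l] // hl hz; exfalso.
have [n [n0 hn]] := span_tor (hl a (mem_head _ _)).
pose c := fun i : 'I_(size (a :: l)) => if i == ord0 then n%:Z else 0.
have hsum : \sum_(i < size (a :: l)) (a :: l)`_i *~ c i = 0.
  rewrite big_ord_recl /= /c eqxx big1 => [|i _].
    by rewrite addr0.
  by rewrite eq_sym (negbTE (neq_lift _ _)) mulr0z.
have := hz c hsum ord0; rewrite /c eqxx.
by case: (n) n0.
Qed.

Lemma rk0 (S : {set 'I_(size A)}) : rk S = 0%N.
Proof.
have h0 := rank0 S.
have hr : rank_is S (rk S) := epsilon_spec (inhabits 0%N) (rank_is S) (ex_intro _ 0%N h0).
have [[l [sl [hl hz]]] _] := hr.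
by have := (proj2 h0) l hl hz; rewrite sl leqn0 => /eqP.
Qed.
End Main.
Lemma subset_sum (R : comNzRingType) (I : finType) (Z : {set I}) (y : R) :
  \sum_(S : {set I} | S \subset Z) (y - 1) ^+ #|S| = y ^+ #|Z|.
Proof.
pose F i : R := if i \in Z then y - 1 else 0.
have h := @bigA_distr R 0 1 *%R +%R I F (fun _ => 1).
have -> : y ^+ #|Z| = \prod_i (F i + 1).
  rewrite -prodr_const big_mkcond /=.
  by apply: eq_bigr => i _; rewrite /F; case: (i \in Z); rewrite ?subrK ?add0r.
rewrite h [RHS](big_mkcond (fun S : {set I} => true)) [LHS]big_mkcond /=.
apply: eq_bigr => S _.
rewrite -big_mkcond /=.
case: (boolP (S \subset Z)) => hS.
  rewrite -prodr_const; apply: eq_bigr => i iS.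
  by rewrite /F (subsetP hS _ iS).
have [i iS iZ] : exists2 i, i \in S & i \notin Z.
  by move/subsetPn: hS => [i iS iZ]; exists i.
by rewrite (bigD1 i) //= /F (negbTE iZ) mul0r.
Qed.
Theorem mainTheorem8 (Gam G : zmodType) (A : seq Gam)
  (hGam : fin_gen Gam) (hG : torsionwise_finite G)
  (hA : forall i : 'I_(size A), torsion A`_i)
  (R : comNzRingType) (x y : R) :
  TutteG G A x y =
  \sum_(k < (size A).+1)
     (\sum_(S : {set 'I_(size A)} | #|S| == k) McountS G S)%:R * y ^+ k.
Proof.
have [s0 hs0] := tor_fin hGam.
set ts := undup [seq a <- s0 | pb (torsion a)].
have uts : uniq ts := undup_uniq _.
have Pts : forall a, torsion a <-> a \in ts.
  move=> a; rewrite mem_undup mem_filter; split.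
    by move=> h; apply/andP; split; [apply/pbP | apply: hs0].
  by move=> /andP[/pbP h _].
have [E [E0 hE]] := common_exp (fun a ha => proj2 (Pts a) ha).
have [gs hgs] := hG E E0.
have hval : forall f, hom_on (@torsion Gam) f -> forall a, torsion a -> f a \in gs.
  move=> f hf a ha; apply: hgs; rewrite -fn // hE ?f0 //; exact/Pts.
pose Hb (v : seq G) := pb (hom_on (@torsion Gam) (ext ts v)).
pose Zs (v : seq G) := [set i : 'I_(size A) | ext ts v A`_i == 0].
pose V := VV ts gs.
have emSG : forall S, mSG G S = \sum_(v <- V | Hb v && (S \subset Zs v)) 1%N.
  move=> S; rewrite sum1_count /mSG.
  have hE1 : forall a, tor_mod S a <-> torsion a := tor_modE hA S.
  have hE2 : forall a, torsion a <-> tor_mod S a := fun a => iff_sym (hE1 a).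
  have Pts' : forall a, tor_mod S a <-> a \in ts.
    by move=> a; apply: iff_trans (hE1 a) (Pts a).
  rewrite (count_modE (gs := gs) uts Pts').
  - apply: eq_in_count => v _ /=; rewrite /Hb.
    case: (pbP (hom_on (@torsion Gam) (ext ts v))) => hh /=.
      apply/pbP/subsetP.
        move=> [_ h2] i iS; rewrite /Zs inE; apply/eqP; apply: h2; exact: in_spanA.
      move=> h; split; first exact: hom_eq hE2 hh.
      move=> a [c ->]; rewrite (f_sum hh) //; apply: big1 => i iS.
      by move: (h i iS); rewrite /Zs inE => /eqP ->; rewrite mul0rz.
    apply/negbTE/pbP => -[h1 _]; apply: hh; exact: hom_eq hE1 h1.
  - move=> f g e [h1 h2]; split.
      move=> a b ha hb.
      have tB : tor_mod S (a - b) by apply/hE2; apply: torsionB; apply/hE1.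
      by rewrite -!e //; exact: h1.
    move=> a ha; rewrite -e; [exact: h2 ha | apply/hE2; exact: (span_tor hA ha)].
  - move=> f [h1 _] a ha; apply: hval; [exact: hom_eq hE1 h1 | exact/hE1].
have eMc : forall S, McountS G S = \sum_(v <- V | Hb v && (Zs v == S)) 1%N.
  move=> S; rewrite sum1_count /McountS (count_modE (gs := gs) uts Pts).
  - apply: eq_in_count => v _ /=; rewrite /Hb.
    case: (pbP (hom_on (@torsion Gam) (ext ts v))) => hh /=.
      apply/pbP/eqP.
        move=> [_ [h2 h3]]; apply/setP => i; rewrite /Zs inE; case iS: (i \in S).
          by apply/eqP; apply: h2; apply: in_spanA.
        by apply/eqP; apply: h3; rewrite iS.
      move=> e; split=> //; split.
        move=> a [c ->]; rewrite (f_sum hh) //; apply: big1 => i iS.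
        have : i \in Zs v by rewrite e.
        by rewrite /Zs inE => /eqP ->; rewrite mul0rz.
      move=> i iS; have : i \notin Zs v by rewrite e.
      by rewrite /Zs inE => /eqP.
    apply/negbTE/pbP => -[h1 _]; exact: hh h1.
  - move=> f g e [h1 [h2 h3]]; split; [|split].
      move=> a b ha hb; rewrite -!e //; [exact: h1 | exact: torsionB].
      move=> a ha; rewrite -e; [exact: h2 ha | exact: (span_tor hA ha)].
    move=> i iS; rewrite -e; [exact: h3 | exact: hA].
  - by move=> f [h1 _] a ha; apply: hval.
rewrite /TutteG.
transitivity (\sum_(v <- V | Hb v) y ^+ #|Zs v|).
  under eq_bigr => S _ do rewrite !(rk0 hA) subnn expr0 mulr1 subn0 emSG natr_sum mulr_suml.
  under eq_bigr => S _ do rewrite big_mkcondr /=.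
  rewrite exchange_big /=; apply: eq_bigr => v _.
  rewrite -big_mkcond /= -(subset_sum (Zs v) y); apply: eq_bigr => S _.
  by rewrite mul1r.
symmetry.
have -> : \sum_(k < (size A).+1)
     (\sum_(S : {set 'I_(size A)} | #|S| == k) McountS G S)%:R * y ^+ k =
   \sum_(k < (size A).+1) \sum_(S : {set 'I_(size A)} | #|S| == k) (McountS G S)%:R * y ^+ #|S|.
  apply: eq_bigr => k _; rewrite natr_sum mulr_suml; apply: eq_bigr => S /eqP -> //.
have -> : \sum_(k < (size A).+1) \sum_(S : {set 'I_(size A)} | #|S| == k) (McountS G S)%:R * y ^+ #|S|
   = \sum_(S : {set 'I_(size A)}) (McountS G S)%:R * y ^+ #|S|.
  symmetry; rewrite (partition_big (fun S : {set 'I_(size A)} => (inord #|S| : 'I_(size A).+1)) xpredT) //.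
  apply: eq_bigr => k _; apply: eq_bigl => S.
  rewrite -val_eqE /= inordK // ltnS.
  by have := max_card S; rewrite card_ord.
under eq_bigr => S _ do rewrite eMc natr_sum mulr_suml big_mkcondr /=.
rewrite exchange_big /=; apply: eq_bigr => v _.
rewrite -big_mkcond /=.
rewrite (eq_bigl (fun S => S == Zs v)) ?big_pred1_eq ?mul1r // => S; exact: eq_sym.
Qed.
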